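(* For every generalized Stirling permutation $u$ of degree $n$ and every planar tree $t$ of degree $n$: $\pi(u)\le_{PT}t$ if and only if $u\le_{Pw}\iota(t)$. That is, $\pi$ and $\iota$ form a Galois connection between the planar weak order on generalized Stirling permutations and the planar Tamari order on planar trees.
   Context: A planar tree has linearly ordered children at each node, each node being a leaf or having $\ge2$ children (internal node); degree = number of leaves minus one. A generalized Stirling permutation (GSP) is a planar tree together with a bijection $\kappa$ from its internal nodes to $\{1,\dots,N\}$ ($N$ = number of internal nodes) increasing from each internal node to its internal children; $\pi(u)$ is its underlying planar tree. Its word $\mathbf w(u)$: a leaf has empty word; a node $x$ with children $c_1,\dots,c_k$ has word $\mathbf w(c_1)\kappa(x)\mathbf w(c_2)\cdots\kappa(x)\mathbf w(c_k)$. For each planar tree $t$ there is exactly one GSP with underlying tree $t$ whose word is $213$-avoiding (no $i<j<k$ with $w_k>w_i>w_j$); it is denoted $\iota(t)$. Planar weak order: for packed words, $w^{-1}(a)=\{p:w_p=a\}$, $\mathrm{iInv}(w)=\{(a,b):a<b,\ \min w^{-1}(a)>\max w^{-1}(b)\}$, $T_a(w)$ = $w$ with letters $a,a+1$ swapped; the order is the reflexive–transitive closure of: $u$ is covered by $w$ iff $u=T_a(w)$ and $|\mathrm{iInv}(w)|=|\mathrm{iInv}(u)|+1$. On GSPs, $u\le_{Pw}v$ iff $\mathbf w(u)\le\mathbf w(v)$. Planar Tamari order: if an internal node $x$ has children $c_1,\dots,c_{a-1},y$ ($a\ge2$) with $y$ internal having children $d_1,\dots,d_{b+1}$ ($b\ge1$),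 the left rotation at $x$ replaces the subtree at $x$ by a node with children $z,d_2,\dots,d_{b+1}$, where $z$ is a new node with children $c_1,\dots,c_{a-1},d_1$. $\le_{PT}$ is the reflexive–transitive closure of ''$t$ is a left rotation of $s$''. *)

(* Defs.v *)
From mathcomp Require Import all_boot.
From Stdlib Require Import Relations.Relation_Operators.
Set Implicit Arguments. Unset Strict Implicit. Unset Printing Implicit Defensive.

Inductive ptree := PLeaf | PNode of seq ptree.

Fixpoint wf_pt (t : ptree) : bool :=
  match t with
  | PLeaf => true
  | PNode cs => (1 < size cs) && all wf_pt cs
  end.

Fixpoint nleaves (t : ptree) : nat :=
  match t with
  | PLeaf => 1
  | PNode cs => sumn (map nleaves cs)
  end.

Definition pt_degree (t : ptree) : nat := (nleaves t).-1.

Inductive ltree := LLeaf | LNode of nat & seq ltree.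

Fixpoint pi_tree (u : ltree) : ptree :=
  match u with
  | LLeaf => PLeaf
  | LNode _ cs => PNode (map pi_tree cs)
  end.

Fixpoint labels (u : ltree) : seq nat :=
  match u with
  | LLeaf => [::]
  | LNode k cs => k :: flatten (map labels cs)
  end.

Definition lab_gt (k : nat) (c : ltree) : bool :=
  match c with LLeaf => true | LNode k' _ => k < k' end.

Fixpoint increasing (u : ltree) : bool :=
  match u with
  | LLeaf => true
  | LNode k cs => all (lab_gt k) cs && all increasing cs
  end.

(* u is a GSP: planar tree, kappa a bijection internal nodes -> {1..N}, increasing *)
Definition is_gsp (u : ltree) : bool :=
  [&& wf_pt (pi_tree u),
      perm_eq (labels u) (iota 1 (size (labels u))) &
      increasing u].

Definition gsp_degree (u : ltree) : nat := pt_degree (pi_tree u).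

Fixpoint word (u : ltree) : seq nat :=
  match u with
  | LLeaf => [::]
  | LNode k cs =>
      match map word cs with
      | [::] => [::]
      | w1 :: ws => w1 ++ flatten (map (cons k) ws)
      end
  end.

Definition avoids213 (w : seq nat) : Prop :=
  forall i j k, i < j -> j < k -> k < size w ->
    ~ (nth 0 w j < nth 0 w i /\ nth 0 w i < nth 0 w k).

Definition is_iota (t : ptree) (v : ltree) : Prop :=
  is_gsp v /\ pi_tree v = t /\ avoids213 (word v).

Definition maxw (w : seq nat) : nat := foldr maxn 0 w.

Definition packed (w : seq nat) : bool :=
  all (fun a => a \in w) (iota 1 (maxw w)) && all (fun a => 0 < a) w.

(* max w^{-1}(b) (for b occurring in w) *)
Definition lastpos (b : nat) (w : seq nat) : nat := (size w).-1 - index b (rev w).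
(* min w^{-1}(a) is index a w *)

Definition iinv_card (w : seq nat) : nat :=
  count (fun p : nat * nat => (p.1 < p.2) && (lastpos p.2 w < index p.1 w))
        [seq (a, b) | a <- iota 1 (maxw w), b <- iota 1 (maxw w)].

Definition Tswap (a : nat) (w : seq nat) : seq nat :=
  map (fun x => if x == a then a.+1 else if x == a.+1 then a else x) w.

Definition pw_cover (u w : seq nat) : Prop :=
  [/\ packed u, packed w,
      exists a, u = Tswap a w &
      iinv_card w = (iinv_card u).+1].

Definition pw_le : seq nat -> seq nat -> Prop := clos_refl_trans (seq nat) pw_cover.

Definition gsp_le (u v : ltree) : Prop := pw_le (word u) (word v).

Inductive lrot : ptree -> ptree -> Prop :=
  | lrot_root (cs : seq ptree) (d1 : ptree) (ds : seq ptree) :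
      cs <> [::] -> ds <> [::] ->
      lrot (PNode (rcons cs (PNode (d1 :: ds))))
           (PNode (PNode (rcons cs d1) :: ds))
  | lrot_in (cs1 cs2 : seq ptree) (c c' : ptree) :
      lrot c c' -> lrot (PNode (cs1 ++ c :: cs2)) (PNode (cs1 ++ c' :: cs2)).

Definition pt_le : ptree -> ptree -> Prop := clos_refl_trans ptree lrot.

(* Main.v *)
Require Import Defs.
From mathcomp Require Import all_boot zify.
From Stdlib Require Import Relations.Relation_Operators Classical.
From Stdlib Require List.
Unset Printing Implicit Defensive.

Definition sg (a x : nat) := if x == a then a.+1 else if x == a.+1 then a else x.

Lemma sgK a : involutive (sg a).
Proof. move=> x; rewrite /sg. case: (eqVneq x a) => [->|h1]. rewrite (gtn_eqF (ltnSn a)) eqxx //.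
case: (eqVneq x a.+1) => [->|h2]; first by rewrite eqxx.
by rewrite ?(negbTE h1) ?(negbTE h2). Qed.

Lemma sg_inj a : injective (sg a).
Proof. exact: inv_inj (sgK a). Qed.

Lemma TswapE a w : Tswap a w = map (sg a) w.
Proof. by []. Qed.

Lemma maxw_ub w x : x \in w -> x <= maxw w.
Proof.
elim: w => //= y w IH; rewrite in_cons => /orP[/eqP->|/IH h]; first exact: leq_maxl.
exact: leq_trans h (leq_maxr _ _).
Qed.

Lemma maxw_in w : w != [::] -> maxw w \in w.
Proof.
elim: w => // y w IH _; rewrite [maxw _]/= -/(maxw w) in_cons.
case: w IH => [|z w] IH; first by rewrite /= maxn0 eqxx.
case: (leqP y (maxw (z :: w))) => h; first by rewrite IH ?orbT.
by rewrite eqxx.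
Qed.

Lemma maxw_le s1 s2 : {subset s1 <= s2} -> maxw s1 <= maxw s2.
Proof.
case: s1 => [|y s1] h; first by [].
apply: maxw_ub; apply: h; exact: maxw_in.
Qed.

Lemma maxw_eqmem s1 s2 : s1 =i s2 -> maxw s1 = maxw s2.
Proof.
move=> h; apply/eqP; rewrite eqn_leq !maxw_le // => x; by rewrite h.
Qed.

Lemma packed_pos w x : packed w -> x \in w -> 0 < x.
Proof. by case/andP=> _ /allP h /h. Qed.

Lemma packed_mem w k : packed w -> 0 < k -> k <= maxw w -> k \in w.
Proof.
case/andP=> /allP h _ k0 km; apply: h; rewrite mem_iota; lia.
Qed.

Lemma mem_Tswap a w x : (x \in Tswap a w) = (sg a x \in w).
Proof. by rewrite TswapE -{1}(sgK a x) (mem_map (sg_inj a)). Qed.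

Lemma Tswap_eqmem a w : a \in w -> a.+1 \in w -> Tswap a w =i w.
Proof.
move=> ha hb x; rewrite mem_Tswap /sg.
case: (eqVneq x a) => [->|h1]; first by rewrite ha hb.
case: (eqVneq x a.+1) => [->|h2]; by rewrite ?ha ?hb.
Qed.

Lemma packed_Tswap a w : packed w -> a \in w -> a.+1 \in w -> packed (Tswap a w).
Proof.
move=> pw ha hb; have e := Tswap_eqmem _ _ ha hb.
rewrite /packed (maxw_eqmem _ _ e); apply/andP; split; apply/allP => x.
  by rewrite e => hx; case/andP: pw => /allP /(_ _ hx).
by rewrite e; apply: packed_pos.
Qed.

Lemma index_le (w : seq nat) i x : i < size w -> nth 0 w i = x -> index x w <= i.
Proof.
move=> hi hx; rewrite leqNgt; apply/negP => h.
have := before_find 0 h; by rewrite hx /= eqxx.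
Qed.

Lemma lastpos_ge (w : seq nat) j b : j < size w -> nth 0 w j = b -> j <= lastpos b w.
Proof.
move=> hj hb; rewrite /lastpos.
have h1 : size w - j.+1 < size (rev w) by rewrite size_rev; lia.
have h2 : nth 0 (rev w) (size w - j.+1) = b.
  have e : size w - (size w - j.+1).+1 = j by lia.
  by rewrite nth_rev ?e // ; rewrite size_rev in h1.
have := index_le _ _ _ h1 h2; rewrite size_rev in h1; lia.
Qed.

Lemma lastpos_in (w : seq nat) b : b \in w -> lastpos b w < size w /\ nth 0 w (lastpos b w) = b.
Proof.
move=> hb; rewrite /lastpos.
have hr : b \in rev w by rewrite mem_rev.
have hi : index b (rev w) < size w by rewrite -size_rev index_mem.
split; first lia.
have := nth_index 0 hr; rewrite nth_rev // ?size_rev //.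
by have -> : size w - (index b (rev w)).+1 = (size w).-1 - index b (rev w) by lia.
Qed.

Lemma index_in (w : seq nat) b : b \in w -> index b w < size w /\ nth 0 w (index b w) = b.
Proof. by move=> hb; rewrite index_mem nth_index. Qed.

Lemma count_diff (T : eqType) (L : seq T) (P Q : pred T) s :
  uniq L -> s \in L -> (forall x, x \in L -> x != s -> P x = Q x) ->
  count P L + Q s = count Q L + P s.
Proof.
move=> uL sL H; have pr := perm_to_rem sL.
rewrite (permP pr P) (permP pr Q) /=.
have -> : count P (rem s L) = count Q (rem s L).
  apply: eq_in_count => x; rewrite (mem_rem_uniq _ uL) => /andP[h1 h2]; exact: H.
lia.
Qed.

Definition iL (M : nat) := [seq (x, y) | x <- iota 1 M, y <- iota 1 M].
Definition iP (w : seq nat) := fun p : nat * nat => (p.1 < p.2) && (lastpos p.2 w < index p.1 w).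

Lemma iinvE w : iinv_card w = count (iP w) (iL (maxw w)).
Proof. by []. Qed.

Lemma mem_iL M p : (p \in iL M) = (0 < p.1 <= M) && (0 < p.2 <= M).
Proof.
apply/allpairsP/idP => [[[x y] [h1 h2 ->]]|].
  by move: h1 h2; rewrite !mem_iota /=; lia.
case: p => x y /= h; exists (x, y); rewrite !mem_iota /=; split => //; lia.
Qed.

Lemma uniq_iL M : uniq (iL M).
Proof. apply: allpairs_uniq; rewrite ?iota_uniq //; by move=> [? ?] [? ?] _ _ /= [-> ->]. Qed.

Lemma sg_le a x y : x <= y -> ~ (x = a /\ y = a.+1) -> sg a x <= sg a y.
Proof.
rewrite /sg => h h'.
case: (eqVneq x a) => [ex|h1]; case: (eqVneq y a) => [ey|h3];
  case: (eqVneq x a.+1) => [ex'|h2]; case: (eqVneq y a.+1) => [ey'|h4]; try lia.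
Qed.

Lemma sg_lt a x y : (x, y) != (a.+1, a) -> (x, y) != (a, a.+1) -> (sg a x < sg a y) = (x < y).
Proof.
rewrite /sg !xpair_eqE => h h'.
case: (eqVneq x a) => [ex|h1]; case: (eqVneq y a) => [ey|h3];
  case: (eqVneq x a.+1) => [ex'|h2]; case: (eqVneq y a.+1) => [ey'|h4]; 
  move: h h'; rewrite ?ex ?ey ?ex' ?ey' ?eqxx /=; try lia.
Qed.

Lemma iinv_swap a w : 0 < a -> a.+1 <= maxw w -> maxw (Tswap a w) = maxw w ->
  iinv_card w + (lastpos a w < index a.+1 w) =
  iinv_card (Tswap a w) + (lastpos a.+1 w < index a w).
Proof.
move=> a0 aM eM; rewrite !iinvE eM.
set M := maxw w; set L := iL M.
set R := fun p : nat * nat => (sg a p.1 < sg a p.2) && (lastpos p.2 w < index p.1 w).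
have hR : count (iP (Tswap a w)) L = count R L.
  have pe : perm_eq [seq (sg a p.1, sg a p.2) | p <- L] L.
    apply: uniq_perm; rewrite ?uniq_iL //.
      rewrite map_inj_uniq ?uniq_iL // => -[x1 y1] [x2 y2] /= [/sg_inj -> /sg_inj ->] //.
    move=> [x y]; apply/mapP/idP => [[[x' y'] hp [-> ->]]|hp].
      move: hp; rewrite !mem_iL /= /sg; 
      case: (eqVneq x' a); case: (eqVneq x' a.+1); case: (eqVneq y' a); case: (eqVneq y' a.+1); lia.
    exists (sg a x, sg a y); last by rewrite !sgK.
    move: hp; rewrite !mem_iL /= /sg;
    case: (eqVneq x a); case: (eqVneq x a.+1); case: (eqVneq y a); case: (eqVneq y a.+1); lia.
  rewrite -(permP pe) count_map; apply: eq_count => -[x y].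
  rewrite /preim /iP /R /= /lastpos TswapE size_map -map_rev !index_map //; exact: sg_inj.
rewrite hR.
set s1 := (a.+1, a); set s2 := (a, a.+1).
have s1L : s1 \in L by rewrite mem_iL /=; lia.
have s2L : s2 \in L by rewrite mem_iL /=; lia.
set P1 := fun p => if p == s1 then R p else iP w p.
have e1 := @count_diff _ L (iP w) P1 s1 (uniq_iL M) s1L.
have e2 := count_diff _ L P1 R s2 (uniq_iL M) s2L.
rewrite /P1 eqxx in e1; rewrite /P1 /= in e2.
have ne : s2 != s1 by rewrite /s1 /s2 xpair_eqE; apply/nandP; left; lia.
move: e1 e2; rewrite (negbTE ne).
have -> : R s1 = (lastpos a w < index a.+1 w) by rewrite /R /= /sg eqxx (gtn_eqF (ltnSn a)) eqxx ltnSn.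
have -> : R s2 = false by rewrite /R /= /sg eqxx (gtn_eqF (ltnSn a)) eqxx ltnNge leqnSn.
have -> : iP w s1 = false by rewrite /iP /= ltnNge leqnSn.
have -> : iP w s2 = (lastpos a.+1 w < index a w) by rewrite /iP /= ltnSn.
move=> e1 e2.
have h1 : forall x, x \in L -> x != s1 -> iP w x = (if x == s1 then R x else iP w x).
  by move=> x _ hx; rewrite (negbTE hx).
have h2 : forall x : nat * nat, x \in L -> x != s2 -> (if x == s1 then R x else iP w x) = R x.
  move=> x _ hx; case: ifP => // hx1; rewrite /iP /R sg_lt //; by apply/negbT.
move: (e1 h1) (e2 h2); rewrite !addn0 => ->; by [].
Qed.

Definition Rel (x y : seq nat) : Prop :=
  [/\ size x = size y,
      (forall i j, i < size x -> j < size x -> (nth 0 x i == nth 0 x j) = (nth 0 y i == nth 0 y j)) &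
      (forall i j, i < j -> j < size x -> nth 0 y i <= nth 0 y j -> nth 0 x i <= nth 0 x j)].

Lemma Rel_refl x : Rel x x.
Proof. by split. Qed.

Lemma Rel_trans x y z : Rel x y -> Rel y z -> Rel x z.
Proof.
case=> s1 e1 m1 [s2 e2 m2]; split; first by rewrite s1.
  by move=> i j hi hj; rewrite e1 // e2 // -s1.
by move=> i j hij hj h; apply: m1 => //; apply: m2 => //; rewrite -s1.
Qed.

Lemma nth_Tswap a w i : i < size w -> nth 0 (Tswap a w) i = sg a (nth 0 w i).
Proof. by move=> hi; rewrite TswapE (nth_map 0). Qed.

Lemma sep_of_cover a w : packed w -> packed (Tswap a w) ->
  iinv_card w = (iinv_card (Tswap a w)).+1 ->
  forall i j, i < j -> j < size w -> nth 0 w i = a -> nth 0 w j = a.+1 -> False.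
Proof.
move=> pw pu hc i j hij hj hi' hj'.
have ha : a \in w by rewrite -hi'; apply: mem_nth; apply: ltn_trans hij hj.
have hb : a.+1 \in w by rewrite -hj'; apply: mem_nth.
have a0 : 0 < a by apply: packed_pos pw ha.
have aM : a.+1 <= maxw w by apply: maxw_ub.
have eM : maxw (Tswap a w) = maxw w by apply: maxw_eqmem; apply: Tswap_eqmem.
have := iinv_swap a w a0 aM eM; rewrite hc.
have l1 := lastpos_ge w j a.+1 hj hj'.
have l2 := index_le w i a ltac:(lia) hi'.
have -> : (lastpos a.+1 w < index a w) = false by apply/negbTE; rewrite -leqNgt; lia.
rewrite addn0; lia.
Qed.

Lemma cover_Rel u w : pw_cover u w -> Rel u w.
Proof.
case=> pu pw [a eu] hc; subst u; split; first by rewrite TswapE size_map.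
  move=> i j hi hj; rewrite TswapE size_map in hi hj.
  by rewrite !nth_Tswap // (inj_eq (@sg_inj a)).
move=> i j hij hj h; rewrite TswapE size_map in hj; rewrite !nth_Tswap //; last lia.
apply: sg_le => // -[e1 e2]; exact: (sep_of_cover a w pw pu hc i j hij hj e1 e2).
Qed.

Lemma pw_le_Rel x y : pw_le x y -> Rel x y.
Proof.
elim=> [u w /cover_Rel //|u|u v w _ h1 _ h2]; first exact: Rel_refl.
exact: Rel_trans h1 h2.
Qed.

Lemma ex_min_classic (P : nat -> Prop) : (exists d, P d) -> exists d, P d /\ forall d', d' < d -> ~ P d'.
Proof.
case=> d; elim/ltn_ind: d => d IH hd.
case: (classic (exists d', d' < d /\ P d')) => [[d' [h1 h2]]|hn]; first exact: IH h2.
exists d; split => // d' h1 h2; apply: hn; by exists d'.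
Qed.

Lemma packed_eq x y : packed x -> packed y -> size x = size y ->
  (forall i j, i < size x -> j < size x -> (nth 0 x i < nth 0 x j) = (nth 0 y i < nth 0 y j)) -> x = y.
Proof.
move=> px py sz H; apply: (eq_from_nth (x0:=0)) => // i hi.
suff key : forall v i, i < size x -> nth 0 x i = v -> nth 0 y i = v by rewrite (key (nth 0 x i) i hi erefl).
clear i hi => v; elim/ltn_ind: v => v IH i hi hv.
have v0 : 0 < v by rewrite -hv; apply: packed_pos px _; apply: mem_nth.
have hyi : nth 0 y i \in y by apply: mem_nth; rewrite -sz.
have y0 : 0 < nth 0 y i by apply: packed_pos py _.
apply/eqP; rewrite eqn_leq; apply/andP; split.
  rewrite leqNgt; apply/negP => lt.
  have vy : v \in y by apply: packed_mem => //; apply: leq_trans (ltnW lt) (maxw_ub _ _ hyi).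
  have [jy hjy] := index_in y v vy; set j := index v y in jy hjy.
  have hx : nth 0 x j < nth 0 x i by rewrite (H j i); [rewrite hjy | rewrite sz | ].
  have := IH _ (leq_trans hx (eq_leq hv)) j ltac:(by rewrite sz) erefl; lia.
case: v IH hv v0 => // v IH hv _.
case: v IH hv => [|v] IH hv; first by [].
have hm : v.+2 <= maxw x by rewrite -hv; apply: maxw_ub; apply: mem_nth.
have vx : v.+1 \in x by apply: packed_mem => //; lia.
have [jx hjx] := index_in x v.+1 vx; set j := index v.+1 x in jx hjx.
have hxy := IH v.+1 (ltnSn _) j jx hjx.
have : nth 0 x j < nth 0 x i by rewrite hjx hv.
by rewrite (H j i jx hi) hxy.
Qed.

Lemma sg_le_inv a u v : sg a u <= sg a v -> v < u -> u = a.+1 /\ v = a.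
Proof.
rewrite /sg => h h'.
case: (eqVneq u a) h => [eu|h1]; case: (eqVneq v a) => [ev|h3];
  case: (eqVneq u a.+1) => [eu'|h2]; case: (eqVneq v a.+1) => [ev'|h4]; try lia.
Qed.

Lemma II_step x y : packed x -> packed y -> Rel x y ->
  x = y \/ exists y', [/\ pw_cover y' y, packed y' & Rel x y'].
Proof.
move=> px py [sz hE hM].
have eqx : forall i j, i < size x -> j < size x -> nth 0 y i = nth 0 y j -> nth 0 x i = nth 0 x j.
  by move=> i j hi hj e; apply/eqP; rewrite hE // e.
have neqx : forall i j, i < size x -> j < size x -> nth 0 y i != nth 0 y j -> nth 0 x i != nth 0 x j.
  by move=> i j hi hj e; rewrite hE.
case: (classic (exists d i j, [/\ i < j, j < size x, nth 0 y j < nth 0 y i,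
          nth 0 x i < nth 0 x j & nth 0 y i - nth 0 y j = d])) => [hex|hno].
2: { left; apply: packed_eq => // i j hi hj.
  have nd : forall i j, i < j -> j < size x -> nth 0 y j < nth 0 y i -> nth 0 x i < nth 0 x j -> False.
    by move=> i' j' h1 h2 h3 h4; apply: hno; exists (nth 0 y i' - nth 0 y j'), i', j'.
  case: (ltngtP i j) => hij.
  - case: (ltngtP (nth 0 y i) (nth 0 y j)) => hy.
    + have := hM i j hij hj (ltnW hy); have := neqx i j hi hj (negbT (ltn_eqF hy)); lia.
    + apply/negbTE; apply/negP => hx; exact: nd i j hij hj hy hx.
    + by rewrite (eqx i j hi hj hy) ltnn.
  - case: (ltngtP (nth 0 y i) (nth 0 y j)) => hy.
    + have := neqx i j hi hj (negbT (ltn_eqF hy)); case: (ltngtP (nth 0 x i) (nth 0 x j)) => // hx _.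
      by case: (nd j i hij hi hy hx).
    + have := hM j i hij hi (ltnW hy); lia.
    + by rewrite (eqx i j hi hj hy) ltnn.
  - by rewrite hij !ltnn. }
right.
have [d [[i [j [hij hj hyji hxij hd]]] hmin]] := ex_min_classic _ hex.
have hi : i < size x by apply: ltn_trans hij hj.
have dis : forall i' j', i' < j' -> j' < size x -> nth 0 y j' < nth 0 y i' ->
    nth 0 x i' < nth 0 x j' -> d <= nth 0 y i' - nth 0 y j'.
  move=> i' j' h1 h2 h3 h4; rewrite leqNgt; apply/negP => h5.
  by apply: (hmin _ h5); exists i', j'.
have d1 : nth 0 y i = (nth 0 y j).+1.
  apply/eqP; rewrite eqn_leq hyji andbT leqNgt; apply/negP => hlt.
  set c := (nth 0 y j).+1.
  have hyi : nth 0 y i \in y by apply: mem_nth; rewrite -sz.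
  have cy : c \in y by apply: packed_mem => //; apply: leq_trans (ltnW hlt) (maxw_ub _ _ hyi).
  have [ky hky] := index_in y c cy; set k := index c y in ky hky.
  rewrite -sz in ky.
  case: (ltngtP k i) => hki.
  - have hxk : nth 0 x k < nth 0 x i.
      have := hM k i hki hi ltac:(rewrite hky; lia); have := neqx k i ky hi ltac:(rewrite hky; lia); lia.
    have := dis k j (ltn_trans hki hij) hj ltac:(rewrite hky; lia) ltac:(lia); rewrite hky; lia.
  - case: (ltngtP k j) => hkj.
    + case: (ltngtP (nth 0 x i) (nth 0 x k)) => hx.
      * have := dis i k hki ky ltac:(rewrite hky; lia) hx; rewrite hky; lia.
      * have := dis k j hkj hj ltac:(rewrite hky; lia) ltac:(lia); rewrite hky; lia.
      * have := neqx i k hi ky ltac:(rewrite hky; lia); by rewrite hx eqxx.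
    + have hxk : nth 0 x j < nth 0 x k.
        have := hM j k hkj ky ltac:(rewrite hky; lia); have := neqx j k hj ky ltac:(rewrite hky; lia); lia.
      have := dis i k (ltn_trans hij hkj) ky ltac:(rewrite hky; lia) ltac:(lia); rewrite hky; lia.
    + by move: hky; rewrite hkj /c; lia.
  - by move: hky; rewrite hki /c; lia.
set a := nth 0 y j in d1 hyji hxij.
have ha : a \in y by apply: mem_nth; rewrite -sz.
have hb : a.+1 \in y by rewrite -d1; apply: mem_nth; rewrite -sz.
have nsep : forall p q, p < q -> q < size x -> nth 0 y p = a -> nth 0 y q = a.+1 -> False.
  move=> p q hpq hq hp hq'; have hp' : p < size x by apply: ltn_trans hpq hq.
  have e1 := eqx p j hp' hj hp; have e2 := eqx q i hq hi ltac:(by rewrite hq' d1).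
  have := hM p q hpq hq ltac:(rewrite hp hq'; lia); rewrite e1 e2; lia.
have a0 : 0 < a by apply: packed_pos py ha.
have aM : a.+1 <= maxw y by apply: maxw_ub.
have eM : maxw (Tswap a y) = maxw y by apply: maxw_eqmem; apply: Tswap_eqmem.
have ide := iinv_swap a y a0 aM eM.
have f1 : (lastpos a y < index a.+1 y) = false.
  apply/negbTE; rewrite -leqNgt.
  have := lastpos_ge y j a ltac:(by rewrite -sz) erefl.
  have := index_le y i a.+1 ltac:(by rewrite -sz) d1; lia.
have f2 : (lastpos a.+1 y < index a y) = true.
  have [l1 l2] := lastpos_in y a.+1 hb; have [i1 i2] := index_in y a ha.
  rewrite ltnNge; apply/negP => hle.
  case: (ltngtP (index a y) (lastpos a.+1 y)) hle => // h _.
    by apply: (nsep _ _ h); rewrite ?sz.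
  by move: i2 l2; rewrite h => ->; lia.
rewrite f1 f2 addn0 addn1 in ide.
exists (Tswap a y); split.
- split => //; [exact: packed_Tswap | by exists a].
- exact: packed_Tswap.
split; first by rewrite sz TswapE size_map.
  by move=> i' j' hi' hj'; rewrite !nth_Tswap -?sz // (inj_eq (@sg_inj a)) hE.
move=> p q hpq hq; rewrite !nth_Tswap -?sz //; last by apply: ltn_trans hpq hq.
case: (leqP (nth 0 y p) (nth 0 y q)) => hle; first by move=> _; apply: hM.
move=> /sg_le_inv /(_ hle) [e1 e2].
have hp : p < size x by apply: ltn_trans hpq hq.
rewrite (eqx p i hp hi ltac:(by rewrite e1 d1)) (eqx q j hq hj e2); exact: ltnW.
Qed.

Lemma II_main N x y : iinv_card y <= N -> packed x -> packed y -> Rel x y -> pw_le x y.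
Proof.
elim: N x y => [|N IH] x y hN px py hR;
  case: (II_step x y px py hR) => [->|[y' [hc py' hR']]]; try exact: rt_refl.
- by case: hc => _ _ _; lia.
- apply: rt_trans (rt_step _ _ _ _ hc); apply: IH => //; case: hc => _ _ _; lia.
Qed.

Lemma pw_le_iff x y : packed x -> packed y -> (pw_le x y <-> Rel x y).
Proof.
move=> px py; split; first exact: pw_le_Rel.
exact: II_main (leqnn _) px py.
Qed.

Definition run (w : seq nat) i := find (fun x => x < nth 0 w i) (drop i.+1 w).

Definition EqP (W1 W2 : seq nat) := forall i j, i < size W1 -> j < size W1 ->
  (nth 0 W1 i == nth 0 W1 j) = (nth 0 W2 i == nth 0 W2 j).

Definition Qw (W1 W2 : seq nat) : Prop :=
  [/\ size W1 = size W2, EqP W1 W2 & forall i, i < size W1 -> run W2 i <= run W1 i].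

Lemma Qw_refl W : Qw W W.
Proof. by split. Qed.

Lemma Qw_trans A B C : Qw A B -> Qw B C -> Qw A C.
Proof.
case=> s1 e1 r1 [s2 e2 r2]; split; first by rewrite s1.
  by move=> i j hi hj; rewrite e1 // e2 -?s1.
by move=> i hi; apply: leq_trans (r2 i _) (r1 i hi); rewrite -s1.
Qed.
Arguments Qw_trans {A B C}.

Lemma find_size_le (T : Type) (p : pred T) s : find p s <= size s.
Proof. by elim: s => //= x s IH; case: (p x). Qed.

Lemma find_min_cat (T : Type) (p : pred T) s1 s2 : minn (find p (s1 ++ s2)) (size s1) = find p s1.
Proof.
rewrite find_cat; case: (boolP (has p s1)) => h.
  by rewrite has_find in h; apply/minn_idPl/ltnW.
rewrite has_find -leqNgt in h; have e : find p s1 = size s1 by have := find_size_le _ p s1; lia.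
by rewrite e; apply/minn_idPr; rewrite leq_addr.
Qed.

Lemma drop_catS (A B : seq nat) i : i < size A -> drop i.+1 (A ++ B) = drop i.+1 A ++ B.
Proof.
move=> hi; rewrite drop_cat; case: ltnP => h //.
have -> : i.+1 - size A = 0 by lia.
by rewrite drop0 drop_oversize.
Qed.

Lemma run_catl A B i : i < size A -> run A i = minn (run (A ++ B) i) (size A - i.+1).
Proof.
move=> hi; rewrite /run nth_cat hi drop_catS //.
by rewrite -size_drop find_min_cat.
Qed.

Lemma run_catr A B i : run (A ++ B) (size A + i) = run B i.
Proof.
rewrite /run nth_cat ltnNge leq_addr /= addKn.
have -> : (size A + i).+1 = size A + i.+1 by lia.
by rewrite drop_cat ltnNge leq_addr /= addKn.
Qed.

Lemma Qw_catl A1 B1 A2 B2 : size A1 = size A2 -> Qw (A1 ++ B1) (A2 ++ B2) -> Qw A1 A2.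
Proof.
move=> sA [s e r]; split => //.
  move=> i j hi hj; have := e i j; rewrite size_cat !nth_cat -sA hi hj; apply; lia.
move=> i hi; rewrite (run_catl A1 B1 i) // (run_catl A2 B2 i) -?sA //.
have := r i; rewrite size_cat => h; have := h ltac:(lia); lia.
Qed.

Lemma Qw_catr A1 B1 A2 B2 : size A1 = size A2 -> Qw (A1 ++ B1) (A2 ++ B2) -> Qw B1 B2.
Proof.
move=> sA [s e r]; split.
- by move: s; rewrite !size_cat sA; lia.
- move=> i j hi hj; have := e (size A1 + i) (size A1 + j); rewrite size_cat !nth_cat.
  rewrite sA !ltnNge !leq_addr /= !addKn => h; apply: h; lia.
- move=> i hi; have := r (size A1 + i); rewrite size_cat run_catr sA run_catr => h; apply: h; lia.
Qed.

Lemma Qw_cons a1 a2 B1 B2 : Qw (a1 :: B1) (a2 :: B2) -> Qw B1 B2.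
Proof. by move=> h; apply: (Qw_catr [:: a1] B1 [:: a2] B2). Qed.

Definition G (B0 : seq nat) (P : seq (nat * seq nat)) := B0 ++ flatten (map (fun p => p.1 :: p.2) P).
Definition bl (B0 : seq nat) (P : seq (nat * seq nat)) q := nth [::] (B0 :: map snd P) q.
Definition sp (P : seq (nat * seq nat)) p := (nth (0, [::]) P p).1.

Lemma G_nil B0 : G B0 [::] = B0.
Proof. by rewrite /G cats0. Qed.

Lemma G_cons B0 s B P : G B0 ((s, B) :: P) = B0 ++ s :: G B P.
Proof. by []. Qed.

Fixpoint follows (B0 : seq nat) (P : seq (nat * seq nat)) : Prop :=
  match P with
  | [::] => True
  | (s, B) :: P' => (forall x, x \in B0 -> s < x) /\ follows B P'
  end.

Fixpoint sepmax (P : seq (nat * seq nat)) : Prop :=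
  match P with
  | [::] => True
  | (s, B) :: P' => (forall x, x \in G B P' -> s <= x) /\ sepmax P'
  end.

Definition Dsj B0 P :=
  (forall q q' x, q <= size P -> q' <= size P -> q != q' -> x \in bl B0 P q -> x \in bl B0 P q' -> False) /\
  (forall p q, p < size P -> q <= size P -> sp P p \in bl B0 P q -> False).

Lemma G2_cases B0 P B0' P' i : size P = size P' ->
  (forall q, q <= size P -> size (bl B0 P q) = size (bl B0' P' q)) ->
  i < size (G B0 P) ->
  (exists p, [/\ p < size P, nth 0 (G B0 P) i = sp P p & nth 0 (G B0' P') i = sp P' p])
  \/ (exists q r, [/\ q <= size P, r < size (bl B0 P q), nth 0 (G B0 P) i = nth 0 (bl B0 P q) r
        & nth 0 (G B0' P') i = nth 0 (bl B0' P' q) r]).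
Proof.
elim: P B0 B0' P' i => [|[s B] P IH] B0 B0' P' i hs hb hi.
- case: P' hs hb => // _ hb.
  right; exists 0, i; move: hi; rewrite G_nil => hi; split => //; rewrite !G_nil //.
- case: P' hs hb => [//|[s' B'] P'] hs hb.
- have hb0 := hb 0 erefl; rewrite /bl /= in hb0.
  move: hi; rewrite !G_cons !nth_cat -hb0 size_cat /= => hi.
  case: (ltngtP i (size B0)) => h.
  + right; exists 0, i; split => //.
  + have hs' : size P = size P' by case: hs.
    have hb' : forall q, q <= size P -> size (bl B P q) = size (bl B' P' q).
      by move=> q hq; have := hb q.+1 hq.
    have hi' : i - size B0 - 1 < size (G B P) by lia.
    have e : i - size B0 = (i - size B0 - 1).+1 by lia.
    case: (IH B B' P' _ hs' hb' hi') => [[p [h1 h2 h3]]|[q [r [h1 h2 h3 h4]]]].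
    * left; exists p.+1; split => //; by rewrite e /= ?h2 ?h3.
    * right; exists q.+1, r; split => //; by rewrite e /= ?h3 ?h4.
  + left; exists 0; split => //; by rewrite h subnn.
Qed.

Lemma G_EqP B0 P B0' P' : size P = size P' ->
  (forall q, q <= size P -> Qw (bl B0 P q) (bl B0' P' q)) ->
  (forall p p', p < size P -> p' < size P -> (sp P p == sp P p') = (sp P' p == sp P' p')) ->
  Dsj B0 P -> Dsj B0' P' -> EqP (G B0 P) (G B0' P').
Proof.
move=> hs hq hsp [d1 d2] [d1' d2'] i j hi hj.
have hb : forall q, q <= size P -> size (bl B0 P q) = size (bl B0' P' q).
  by move=> q h; case: (hq q h).
have mb : forall B0 P q r, r < size (bl B0 P q) -> nth 0 (bl B0 P q) r \in bl B0 P q.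
  by move=> *; apply: mem_nth.
case: (G2_cases B0 P B0' P' i hs hb hi) => [[p [p1 p2 p3]]|[q [r [q1 q2 q3 q4]]]];
case: (G2_cases B0 P B0' P' j hs hb hj) => [[p' [p1' p2' p3']]|[q' [r' [q1' q2' q3' q4']]]].
- by rewrite p2 p3 p2' p3' hsp.
- rewrite p2 p3 q3' q4'.
  have nb1 : (sp P p == nth 0 (bl B0 P q') r') = false.
    apply/negbTE/negP => /eqP e; apply: (d2 p q') => //; by rewrite e mb.
  have nb2 : (sp P' p == nth 0 (bl B0' P' q') r') = false.
    apply/negbTE/negP => /eqP e; apply: (d2' p q'); [by rewrite -hs | by rewrite -hs | by rewrite e mb // -hb].
  by rewrite nb1 nb2.
- rewrite q3 q4 p2' p3'.
  have nb1 : (nth 0 (bl B0 P q) r == sp P p') = false.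
    apply/negbTE/negP => /eqP e; apply: (d2 p' q) => //; by rewrite -e mb.
  have nb2 : (nth 0 (bl B0' P' q) r == sp P' p') = false.
    apply/negbTE/negP => /eqP e; apply: (d2' p' q); [by rewrite -hs | by rewrite -hs | by rewrite -e mb // -hb].
  by rewrite nb1 nb2.
- rewrite q3 q4 q3' q4'; case: (eqVneq q q') => [eq0|nq].
    by subst q'; case: (hq q q1) => _ e _; apply: e.
  have nb1 : (nth 0 (bl B0 P q) r == nth 0 (bl B0 P q') r') = false.
    apply/negbTE/negP => /eqP e; apply: (d1 q q' (nth 0 (bl B0 P q) r) q1 q1' nq); [by rewrite mb | by rewrite e mb].
  have nb2 : (nth 0 (bl B0' P' q) r == nth 0 (bl B0' P' q') r') = false.
    apply/negbTE/negP => /eqP e; apply: (d1' q q' (nth 0 (bl B0' P' q) r));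
      [by rewrite -hs | by rewrite -hs | by [] | by rewrite mb // -hb | by rewrite e mb // -hb].
  by rewrite nb1 nb2.
Qed.

Lemma size_G B0 P : size (G B0 P) = size B0 + sumn (map (fun p => (size p.2).+1) P).
Proof. by rewrite /G size_cat size_flatten /shape -map_comp. Qed.

Lemma size_G_eq B0 P B0' P' : size P = size P' ->
  (forall q, q <= size P -> size (bl B0 P q) = size (bl B0' P' q)) -> size (G B0 P) = size (G B0' P').
Proof.
elim: P B0 B0' P' => [|[s B] P IH] B0 B0' [|[s' B'] P'] //= hs hb.
  by rewrite !G_nil; apply: (hb 0).
rewrite !G_cons !size_cat /= (IH B B' P') //; first by rewrite (hb 0).
- by case: hs.
- by move=> q hq; apply: (hb q.+1).
Qed.

Lemma run_fol B0 s X i : (forall x, x \in B0 -> s < x) -> i < size B0 -> run (B0 ++ s :: X) i = run B0 i.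
Proof.
move=> hf hi; rewrite /run nth_cat hi drop_catS // find_cat.
case: ifP => // hn; rewrite /= hf ?mem_nth // addn0.
by apply/eqP; rewrite eqn_leq find_size_le /= leqNgt -has_find hn.
Qed.

Lemma drop_sep (B0 : seq nat) s X : drop (size B0).+1 (B0 ++ s :: X) = X.
Proof. by rewrite -cat_rcons drop_size_cat ?size_rcons. Qed.

Lemma run_sep B0 s X : run (B0 ++ s :: X) (size B0) <= size X.
Proof. rewrite /run drop_sep; exact: find_size_le. Qed.

Lemma run_sepmax B0 s X : (forall x, x \in X -> s <= x) -> run (B0 ++ s :: X) (size B0) = size X.
Proof.
move=> h; rewrite /run drop_sep nth_cat ltnn subnn /=.
apply/eqP; rewrite eqn_leq find_size_le /= leqNgt -has_find; apply/hasP => -[x hx].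
by rewrite ltnNge h.
Qed.

Lemma run_after B0 s X j : run (B0 ++ s :: X) (size B0 + j.+1) = run X j.
Proof.
by rewrite run_catr (run_catr [:: s] X j).
Qed.

Lemma G_runs B0 P B0' P' : size P = size P' ->
  (forall q, q <= size P -> Qw (bl B0 P q) (bl B0' P' q)) ->
  follows B0 P -> follows B0' P' -> sepmax P ->
  forall i, i < size (G B0 P) -> run (G B0' P') i <= run (G B0 P) i.
Proof.
elim: P B0 B0' P' => [|[s B] P IH] B0 B0' [|[s' B'] P'] // hs hq hf hf' hm i hi.
  by move: hi; rewrite !G_nil => hi; case: (hq 0 erefl) => _ _; apply.
case: hf hf' hm => f1 f2 [f1' f2'] [m1 m2].
have hb0 : size B0 = size B0' by case: (hq 0 erefl).
move: hi; rewrite !G_cons size_cat /= => hi.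
case: (ltngtP i (size B0)) => h.
- rewrite (run_fol B0 s (G B P) i) // (run_fol B0' s' (G B' P') i) -?hb0 //; by case: (hq 0 erefl) => _ _; apply.
- have -> : i = size B0 + (i - size B0 - 1).+1 by lia.
  rewrite (run_after B0 s (G B P)) hb0 (run_after B0' s' (G B' P')); apply: IH => //.
  + by case: hs.
  + by move=> q hq'; apply: (hq q.+1).
  + lia.
- rewrite h (run_sepmax B0 s (G B P)) // hb0.
  have -> : size (G B P) = size (G B' P').
    apply: size_G_eq; first by case: hs.
    by move=> q hq'; case: (hq q.+1 hq').
  exact: (run_sep B0' s' (G B' P')).
Qed.

Lemma layout_Qw B0 P B0' P' : size P = size P' ->
  (forall q, q <= size P -> Qw (bl B0 P q) (bl B0' P' q)) ->
  (forall p p', p < size P -> p' < size P -> (sp P p == sp P p') = (sp P' p == sp P' p')) ->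
  Dsj B0 P -> Dsj B0' P' ->
  follows B0 P -> follows B0' P' -> sepmax P ->
  Qw (G B0 P) (G B0' P').
Proof.
move=> hs hq hsp d d' f f' m; split.
- by apply: size_G_eq => // q h; case: (hq q h).
- exact: G_EqP.
- exact: G_runs.
Qed.

Fixpoint ptree_ind2 (P : ptree -> Prop) (HL : P PLeaf)
  (HN : forall cs, (forall c, List.In c cs -> P c) -> P (PNode cs)) (t : ptree) : P t :=
  match t with
  | PLeaf => HL
  | PNode cs => HN cs ((fix go (l : seq ptree) : forall c, List.In c l -> P c :=
       match l with
       | [::] => fun c (H : List.In c [::]) => False_ind _ H
       | c0 :: l' => fun c H => match H with
                     | or_introl E => eq_ind c0 P (ptree_ind2 P HL HN c0) c E
                     | or_intror H' => go l' c H'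
                     end
       end) cs)
  end.

Fixpoint ltree_ind2 (P : ltree -> Prop) (HL : P LLeaf)
  (HN : forall k cs, (forall c, List.In c cs -> P c) -> P (LNode k cs)) (t : ltree) : P t :=
  match t with
  | LLeaf => HL
  | LNode k cs => HN k cs ((fix go (l : seq ltree) : forall c, List.In c l -> P c :=
       match l with
       | [::] => fun c (H : List.In c [::]) => False_ind _ H
       | c0 :: l' => fun c H => match H with
                     | or_introl E => eq_ind c0 P (ltree_ind2 P HL HN c0) c E
                     | or_intror H' => go l' c H'
                     end
       end) cs)
  end.

Lemma In_nth (T : Type) (x0 : T) (l : seq T) i : i < size l -> List.In (nth x0 l i) l.
Proof. elim: l i => //= x l IH [|i] h; [by left | right; exact: IH]. Qed.

Definition good (u : ltree) := increasing u && uniq (labels u).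

Lemma word_node k c cs : word (LNode k (c :: cs)) = G (word c) (map (fun x => (k, word x)) cs).
Proof. by rewrite /= /G -!map_comp. Qed.

Lemma mem_flatten_map (T : Type) (f : T -> seq nat) (l : seq T) x :
  x \in flatten (map f l) <-> exists c, List.In c l /\ x \in f c.
Proof.
elim: l => [|c l IH] /=; first by split => // -[c []].
rewrite mem_cat; split.
  case/orP => [h|/IH [c' [h1 h2]]]; [by exists c; split => //; left | by exists c'; split => //; right].
move=> [c' [[<-|h1] h2]]; first by rewrite h2.
by apply/orP; right; apply/IH; exists c'.
Qed.

Lemma mem_word_node k cs x : x \in word (LNode k cs) -> x = k \/ exists c, List.In c cs /\ x \in word c.
Proof.
case: cs => //= c cs; rewrite mem_cat => /orP[h|]; first by right; exists c; split => //; left.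
rewrite -map_comp; move/mem_flatten_map => [c' [h1]] /=; rewrite in_cons => /orP[/eqP ->|h]; first by left.
by right; exists c'; split => //; right.
Qed.

Lemma mem_labels_node k cs x : x \in labels (LNode k cs) -> x = k \/ exists c, List.In c cs /\ x \in labels c.
Proof. by rewrite /= in_cons => /orP[/eqP->|/mem_flatten_map]; [left|right]. Qed.

Lemma word_sub_labels u x : x \in word u -> x \in labels u.
Proof.
elim/ltree_ind2: u x => // k cs IH x /mem_word_node [->|[c [h1 h2]]]; first by rewrite /= in_cons eqxx.
rewrite /= in_cons; apply/orP; right; apply/mem_flatten_map; exists c; split => //; exact: IH.
Qed.

Lemma all_In (T : Type) (p : pred T) l c : all p l -> List.In c l -> p c.
Proof. elim: l => //= y l IH /andP[h1 h2] [<-//|h]; exact: IH. Qed.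

Lemma inc_labels_gt u k : increasing u -> lab_gt k u -> forall x, x \in labels u -> k < x.
Proof.
elim/ltree_ind2: u k => // k' cs IH k /= /andP[h1 h2] hk x.
rewrite in_cons => /orP[/eqP->//|/mem_flatten_map [c [hc hx]]].
apply: ltn_trans hk _; apply: (IH c hc) => //; [exact: all_In h2 hc | exact: all_In h1 hc].
Qed.

Lemma inc_child_gt k cs c x : increasing (LNode k cs) -> List.In c cs -> x \in labels c -> k < x.
Proof.
move=> /= /andP[h1 h2] hc; apply: inc_labels_gt; [exact: all_In h2 hc | exact: all_In h1 hc].
Qed.

Lemma uniq_flatten_In (T : Type) (f : T -> seq nat) l c : uniq (flatten (map f l)) -> List.In c l -> uniq (f c).
Proof.
elim: l => //= c' l IH; rewrite cat_uniq => /and3P[h1 _ h3] [<-//|h]; exact: IH.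
Qed.

Lemma good_child k cs c : good (LNode k cs) -> List.In c cs -> good c.
Proof.
case/andP => /= /andP[_ hi] hu hc; rewrite /good (all_In _ _ _ _ hi hc) /=.
move: hu => /andP[_ hu]; exact: uniq_flatten_In hu hc.
Qed.

Lemma uniq_flatten_nth (L : seq (seq nat)) q q' x : uniq (flatten L) -> q < size L -> q' < size L ->
  q != q' -> x \in nth [::] L q -> x \in nth [::] L q' -> False.
Proof.
elim: L q q' => //= B L IH q q' u hq hq' hne h1 h2.
rewrite cat_uniq in u; case/and3P: u => u1 u2 u3.
have hf : forall r, r < size L -> x \in nth [::] L r -> x \in flatten L.
  by move=> r hr hx; apply/flattenP; exists (nth [::] L r) => //; exact: mem_nth.
move/hasPn: u2 => /(_ x) h.
case: q q' hq hq' hne h1 h2 => [|q] [|q'] //= hq hq' hne h1 h2.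
- by move: (h (hf q' hq' h2)); rewrite h1.
- by move: (h (hf q hq h1)); rewrite h2.
- exact: (IH q q').
Qed.

Lemma bl_node k c cs q : q <= size cs ->
  bl (word c) (map (fun x => (k, word x)) cs) q = word (nth LLeaf (c :: cs) q).
Proof.
move=> hq; rewrite /bl -map_comp.
have -> : [seq (snd \o (fun x => (k, word x))) i | i <- cs] = map word cs by apply: eq_map.
by rewrite -(map_cons word c cs) (nth_map LLeaf).
Qed.

Lemma sp_node k cs p : p < size cs -> sp (map (fun x => (k, word x)) cs) p = k.
Proof. by move=> hp; rewrite /sp (nth_map LLeaf). Qed.

Lemma labels_node k cs : labels (LNode k cs) = k :: flatten (map labels cs).
Proof. by []. Qed.

Lemma Dsj_node k c cs : uniq (labels (LNode k (c :: cs))) -> Dsj (word c) (map (fun x => (k, word x)) cs).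
Proof.
rewrite labels_node cons_uniq => /andP[hk hu]; split; rewrite size_map.
- move=> q q' x hq hq' hne; rewrite !bl_node // => h1 h2.
  apply: (uniq_flatten_nth (map labels (c :: cs)) q q' x) => //; rewrite ?size_map //.
    by rewrite (nth_map LLeaf) //; apply: word_sub_labels.
  by rewrite (nth_map LLeaf) //; apply: word_sub_labels.
- move=> p q hp hq; rewrite sp_node // bl_node // => /word_sub_labels h.
  move/negP: hk; apply; apply/flattenP; exists (labels (nth LLeaf (c :: cs) q)) => //.
  by rewrite -(nth_map LLeaf [::]) // mem_nth // size_map.
Qed.

Lemma follows_node k c cs : (forall d, List.In d (c :: cs) -> forall x, x \in labels d -> k < x) ->
  follows (word c) (map (fun x => (k, word x)) cs).
Proof.
elim: cs c => //= c2 cs IH c h; split.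
  by move=> x /word_sub_labels; apply: h; left.
by apply: IH => d hd; apply: h; right.
Qed.

Lemma sepmax_node k cs : (forall d, List.In d cs -> forall x, x \in labels d -> k < x) ->
  sepmax (map (fun x => (k, word x)) cs).
Proof.
elim: cs => //= c2 cs IH h; split; last by apply: IH => d hd; apply: h; right.
move=> x; rewrite -word_node => /mem_word_node [->//|[d [hd hx]]].
by apply: ltnW; apply: h (word_sub_labels _ _ hx).
Qed.

Lemma node_Qw k k' cs cs' : good (LNode k cs) -> good (LNode k' cs') -> size cs = size cs' ->
  (forall i, i < size cs -> Qw (word (nth LLeaf cs i)) (word (nth LLeaf cs' i))) ->
  Qw (word (LNode k cs)) (word (LNode k' cs')).
Proof.
case: cs cs' => [|c cs] [|c' cs'] // g g' hs hq.
rewrite !word_node; case: hs => hs.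
case/andP: g => gi gu; case/andP: g' => gi' gu'.
apply: layout_Qw; rewrite ?size_map //.
- move=> q hq'; rewrite !bl_node -?hs //; exact: hq.
- by move=> p p' hp hp'; rewrite !sp_node -?hs // !eqxx.
- exact: Dsj_node.
- exact: Dsj_node.
- by apply: follows_node => d hd x hx; apply: inc_child_gt gi hd hx.
- by apply: follows_node => d hd x hx; apply: inc_child_gt gi' hd hx.
- by apply: sepmax_node => d hd x hx; apply: inc_child_gt gi (or_intror hd) hx.
Qed.

Lemma nth_map_pi cs i : nth PLeaf (map pi_tree cs) i = pi_tree (nth LLeaf cs i).
Proof.
elim: cs i => [|c cs IH] [|i] //=.
Qed.

Lemma LI u1 : forall u2, good u1 -> good u2 -> pi_tree u1 = pi_tree u2 -> Qw (word u1) (word u2).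
Proof.
elim/ltree_ind2: u1 => [|k cs IH] [|k' cs'] //= g1 g2 e; try exact: Qw_refl.
case: e => e; have hs : size cs = size cs' by rewrite -(size_map pi_tree) e size_map.
apply: node_Qw => // i hi; apply: IH.
- exact: In_nth.
- exact: good_child g1 (In_nth _ _ _ _ hi).
- by apply: good_child g2 (In_nth _ _ _ _ _); rewrite -hs.
- by rewrite -!nth_map_pi e.
Qed.

Lemma all_of_In (T : Type) (p : pred T) l : (forall c, List.In c l -> p c) -> all p l.
Proof. elim: l => //= c l IH h; rewrite h; [apply: IH => c' hc'; apply: h; by right | by left]. Qed.

Lemma lab_gt_of k c : (forall x, x \in labels c -> k < x) -> lab_gt k c.
Proof. by case: c => //= k' cs h; apply: h; rewrite in_cons eqxx. Qed.

Definition LabP (t : ptree) := forall s, exists u, [/\ pi_tree u = t, increasing u, uniq (labels u)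
   & forall x, x \in labels u -> s <= x < s + size (labels u)].

Definition LabL (cs : seq ptree) := forall s, exists LS, [/\ map pi_tree LS = cs, all increasing LS,
   uniq (flatten (map labels LS)) & forall x, x \in flatten (map labels LS) -> s <= x < s + size (flatten (map labels LS))].

Lemma LabL_of cs : (forall c, List.In c cs -> LabP c) -> LabL cs.
Proof.
elim: cs => [|c cs IH] h s; first by exists [::]; split.
have [u [hu1 hu2 hu3 hu4]] := h c (or_introl erefl) s.
have [LS [h1 h2 h3 h4]] := IH (fun c' hc' => h c' (or_intror hc')) (s + size (labels u)).
exists (u :: LS); split => /=; rewrite ?hu1 ?h1 ?hu2 ?h2 //.
- rewrite cat_uniq hu3 h3 andbT /=; apply/hasPn => x /h4 hx; apply/negP => /hu4; lia.
- move=> x; rewrite mem_cat size_cat => /orP[/hu4|/h4]; lia.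
Qed.

Lemma lab_exists t : LabP t.
Proof.
elim/ptree_ind2: t => [|cs IH] s; first by exists LLeaf.
have [LS [h1 h2 h3 h4]] := LabL_of cs IH s.+1.
exists (LNode s LS); split => /=; rewrite ?h1 //.
- rewrite h2 andbT; apply: all_of_In => c hc; apply: lab_gt_of => x hx.
  have : x \in flatten (map labels LS) by apply/mem_flatten_map; exists c.
  by move/h4; lia.
- rewrite h3 andbT; apply/negP => /h4; lia.
- move=> x; rewrite in_cons => /orP[/eqP->|/h4]; lia.
Qed.

Lemma lab_list cs s : exists LS, [/\ map pi_tree LS = cs, all increasing LS,
   uniq (flatten (map labels LS)) & forall x, x \in flatten (map labels LS) -> s <= x].
Proof.
have [LS [h1 h2 h3 h4]] := LabL_of cs (fun c _ => lab_exists c) s.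
by exists LS; split => // x /h4 /andP[].
Qed.

Lemma good_exists t : exists u, good u /\ pi_tree u = t.
Proof. have [u [h1 h2 h3 _]] := lab_exists t 0; by exists u; rewrite /good h2 h3. Qed.

Definition J (s : nat) (bs : seq (seq nat)) :=
  match bs with [::] => [::] | b :: bs' => b ++ flatten (map (cons s) bs') end.

Lemma word_J k cs : word (LNode k cs) = J k (map word cs).
Proof. by []. Qed.

Lemma word_rcons k (A : seq ltree) y : 0 < size A -> word (LNode k (rcons A y)) = word (LNode k A) ++ k :: word y.
Proof.
case: A => // a A _; rewrite !word_J /= map_rcons -cats1 map_cat flatten_cat /= cats0 catA.
by rewrite -!map_comp.
Qed.

Lemma find_none (T : eqType) (p : pred T) s : (forall x, x \in s -> ~~ p x) -> find p s = size s.
Proof.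
move=> h; apply/eqP; rewrite eqn_leq find_size_le /= leqNgt -has_find; apply/hasPn => x /h //.
Qed.

Lemma Qw_swap k X Y : (forall x, x \in X ++ Y -> k <= x) -> k.+1 \notin X -> k \notin Y ->
  Qw (X ++ Y) (Tswap k (X ++ Y)).
Proof.
move=> hk hX hY; set W := X ++ Y.
have sT : size (Tswap k W) = size W by rewrite TswapE size_map.
split => //.
- by move=> i j hi hj; rewrite !nth_Tswap // (inj_eq (@sg_inj k)).
move=> i hi; rewrite /run nth_Tswap // TswapE -map_drop.
have hWi : nth 0 W i \in W by apply: mem_nth.
case: (eqVneq (nth 0 W i) k) => [e|n1].
- rewrite e [X in _ <= X]find_none; first by apply: leq_trans (find_size_le _ _ _) _; rewrite size_map.
  move=> x hx; rewrite -leqNgt; apply: hk; exact: mem_drop hx.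
case: (eqVneq (nth 0 W i) k.+1) => [e|n2].
- have iX : size X <= i.
    rewrite leqNgt; apply/negP => h; move: e; rewrite /W nth_cat h => e.
    by move: hX; rewrite -e mem_nth.
  have -> : sg k (nth 0 W i) = k by rewrite e /sg eqxx (gtn_eqF (ltnSn k)).
  rewrite e !find_none ?size_map //.
  + move=> x hx; rewrite -leqNgt; have hxW : x \in W by apply: mem_drop hx.
    have : x != k.
      have f : (i.+1 < size X) = false by apply/negbTE; rewrite -leqNgt; lia.
      apply/negP => /eqP ex; move: hx; rewrite /W drop_cat f ex => h.
      by move: hY; rewrite (mem_drop h).
    by have := hk x hxW; lia.
  + move=> y /mapP [x hx ->]; rewrite -leqNgt; have := hk x (mem_drop hx).
    by rewrite /sg; case: eqP => [->|_]; [lia|case: eqP => [->|]; lia].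
- have hv : k.+1 < nth 0 W i by have := hk _ hWi; lia.
  have -> : sg k (nth 0 W i) = nth 0 W i by rewrite /sg (negbTE n1) (negbTE n2).
  rewrite find_map; apply: eq_leq; apply: eq_find => x /=.
  rewrite /sg; case: eqP => [->|_]; first lia.
  by case: eqP => [->|_] //; lia.
Qed.

Lemma map_J f s bs : map f (J s bs) = J (f s) (map (map f) bs).
Proof.
case: bs => //= b bs; rewrite map_cat map_flatten -!map_comp; congr (_ ++ flatten _).
Qed.

Lemma fix_word t : (forall x, x \in labels t -> 2 <= x) -> map (sg 0) (word t) = word t.
Proof.
move=> h; rewrite -[RHS]map_id; apply/eq_in_map => x /word_sub_labels /h hx.
by rewrite /sg; case: eqP => [e|_]; [lia | case: eqP => [e|_] //; lia].
Qed.

Lemma fix_list L : (forall c, List.In c L -> forall x, x \in labels c -> 2 <= x) ->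
  map (map (sg 0)) (map word L) = map word L.
Proof.
elim: L => //= c L IH h.
have hc : forall x, x \in labels c -> 2 <= x by apply: h; left.
have hL : forall c', List.In c' L -> forall x, x \in labels c' -> 2 <= x by move=> c' hc'; apply: h; right.
by rewrite fix_word // IH.
Qed.

Lemma fix_cons_list s s' L : (forall c, List.In c L -> forall x, x \in labels c -> 2 <= x) ->
  sg 0 s = s' -> map (sg 0) (flatten (map (cons s) (map word L))) = flatten (map (cons s') (map word L)).
Proof.
move=> h hs; rewrite map_flatten -!map_comp; congr flatten; elim: L h => //= c L IH h.
have hc : forall x, x \in labels c -> 2 <= x by apply: h; left.
have hL : forall c', List.In c' L -> forall x, x \in labels c' -> 2 <= x by move=> c' hc'; apply: h; right.
by rewrite hs fix_word // IH.
Qed.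

Lemma RotRoot cs d1 ds : 0 < size cs -> 0 < size ds ->
  exists u0 w0, [/\ good u0, good w0, pi_tree u0 = PNode (rcons cs (PNode (d1 :: ds))),
     pi_tree w0 = PNode (PNode (rcons cs d1) :: ds) & Qw (word u0) (word w0)].
Proof.
move=> hcs hds.
have [LS [h1 h2 h3 h4]] := lab_list (cs ++ d1 :: ds) 2.
set LC := take (size cs) LS.
have eC : map pi_tree LC = cs by rewrite /LC map_take h1 take_size_cat.
have eD : map pi_tree (drop (size cs) LS) = d1 :: ds by rewrite map_drop h1 drop_size_cat.
case eDS: (drop (size cs) LS) eD => [|ld1 LDs] //= [e1 e2].
have eLS : LS = LC ++ ld1 :: LDs by rewrite -eDS cat_take_drop.
rewrite eLS map_cat flatten_cat /= in h3 h4; rewrite eLS all_cat /= in h2.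
case/and3P: h2 => iC i1 iD.
set FC := flatten (map labels LC) in h3 h4; set FD := flatten (map labels LDs) in h3 h4.
have lC : forall c, List.In c LC -> forall x, x \in labels c -> 2 <= x.
  move=> c hc x hx; apply: h4; rewrite mem_cat; apply/orP; left; apply/mem_flatten_map; by exists c.
have lD : forall c, List.In c LDs -> forall x, x \in labels c -> 2 <= x.
  move=> c hc x hx; apply: h4; rewrite mem_cat mem_cat; apply/orP; right; apply/orP; right.
  apply/mem_flatten_map; by exists c.
have l1 : forall x, x \in labels ld1 -> 2 <= x.
  by move=> x hx; apply: h4; rewrite !mem_cat hx orbT.
have gtC : forall k, k < 2 -> all (lab_gt k) LC.
  move=> k hk; apply: all_of_In => c hc; apply: lab_gt_of => x /(lC c hc); lia.
have gtD : forall k, k < 2 -> all (lab_gt k) LDs.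
  move=> k hk; apply: all_of_In => c hc; apply: lab_gt_of => x /(lD c hc); lia.
have gt1 : forall k, k < 2 -> lab_gt k ld1 by move=> k hk; apply: lab_gt_of => x /l1; lia.
have uL : uniq (0 :: 1 :: FC ++ labels ld1 ++ FD).
  have n0 : 0 \notin FC ++ labels ld1 ++ FD by apply/negP => /h4.
  have n1 : 1 \notin FC ++ labels ld1 ++ FD by apply/negP => /h4.
  by rewrite cons_uniq in_cons negb_or n0 cons_uniq n1 h3.
have sLC : 0 < size LC by rewrite -(size_map pi_tree) eC.
set y := LNode 1 (ld1 :: LDs).
exists (LNode 0 (rcons LC y)), (LNode 0 (LNode 1 (rcons LC ld1) :: LDs)); split.
- rewrite /good /= !all_rcons /= iC i1 iD gtC ?gt1 ?gtD //=.
  rewrite -cons_uniq -cats1 map_cat flatten_cat /= cats0.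
  have pe : perm_eq (0 :: FC ++ 1 :: (labels ld1 ++ FD)) (0 :: 1 :: FC ++ labels ld1 ++ FD).
    by rewrite perm_cons -cat1s perm_catCA perm_refl.
  by move: uL; rewrite -(perm_uniq pe) cons_uniq.
- rewrite /good /= !all_rcons /= iC i1 iD gtC ?gt1 ?gtD //=.
  by rewrite -cats1 map_cat flatten_cat /= cats0 -catA.
- by rewrite /= map_rcons eC /= e1 e2.
- by rewrite /= map_rcons eC e1 e2.
rewrite word_rcons // -cat_rcons.
have -> : word (LNode 0 (LNode 1 (rcons LC ld1) :: LDs)) =
   Tswap 0 (rcons (word (LNode 0 LC)) 0 ++ word y).
  have A1 : map (sg 0) (word (LNode 0 LC)) = word (LNode 1 LC) by rewrite !word_J map_J fix_list.
  have A2 : map (sg 0) (word y) = word ld1 ++ flatten (map (cons 0) (map word LDs)).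
    by rewrite /y word_J /= map_cat fix_word // (fix_cons_list 1 0).
  have A3 : word (LNode 0 (LNode 1 (rcons LC ld1) :: LDs)) =
    word (LNode 1 (rcons LC ld1)) ++ flatten (map (cons 0) (map word LDs)) by [].
  rewrite A3 word_rcons // TswapE map_cat map_rcons A1 A2.
  by rewrite -cats1 -!catA.
apply: Qw_swap => //.
- rewrite mem_rcons in_cons /=; apply/negP => /mem_word_node [//|[c [hc hx]]].
  by have := lC c hc 1 (word_sub_labels _ _ hx).
- apply/negP; rewrite /y => /mem_word_node [//|[c [[<-|hc] hx]]].
    by have := l1 0 (word_sub_labels _ _ hx).
  by have := lD c hc 0 (word_sub_labels _ _ hx).
Qed.

Lemma nth_mid (cs1 cs2 : seq ptree) c c' i : i != size cs1 ->
  nth PLeaf (cs1 ++ c :: cs2) i = nth PLeaf (cs1 ++ c' :: cs2) i.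
Proof.
move=> hi; rewrite !nth_cat; case: ltnP => // h.
have hne : i <> size cs1 by move/eqP: hi.
by have -> : i - size cs1 = (i - size cs1 - 1).+1 by lia.
Qed.

Lemma Rot s s' : lrot s s' -> forall u w, good u -> good w -> pi_tree u = s -> pi_tree w = s' ->
  Qw (word u) (word w).
Proof.
elim=> [cs d1 ds hcs hds|cs1 cs2 c c' hr IH] u w gu gw eu ew.
- have [u0 [w0 [g0 g0' e0 e0' q0]]] : exists u0 w0, [/\ good u0, good w0,
     pi_tree u0 = PNode (rcons cs (PNode (d1 :: ds))),
     pi_tree w0 = PNode (PNode (rcons cs d1) :: ds) & Qw (word u0) (word w0)].
    by apply: RotRoot; [move: hcs; case: (cs) | move: hds; case: (ds)].
  apply: Qw_trans (LI u u0 gu g0 _) (Qw_trans q0 (LI w0 w g0' gw _)); by rewrite ?eu ?e0 ?ew ?e0'.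
- case: u gu eu => // k us gu [eu]; case: w gw ew => // k' ws gw [ew].
  have hs : size us = size ws by rewrite -(size_map pi_tree us) -(size_map pi_tree ws) eu ew !size_cat.
  apply: node_Qw => // i hi.
  have hi' : i < size ws by rewrite -hs.
  have p1 : pi_tree (nth LLeaf us i) = nth PLeaf (cs1 ++ c :: cs2) i by rewrite -nth_map_pi eu.
  have p2 : pi_tree (nth LLeaf ws i) = nth PLeaf (cs1 ++ c' :: cs2) i by rewrite -nth_map_pi ew.
  have g1 := good_child _ _ _ gu (In_nth _ _ _ _ hi).
  have g2 := good_child _ _ _ gw (In_nth _ _ _ _ hi').
  case: (eqVneq i (size cs1)) => [ei|ni].
  + apply: IH => //; [rewrite p1 ei | rewrite p2 ei]; by rewrite nth_cat ltnn subnn.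
  + by apply: LI => //; rewrite p1 p2 (nth_mid _ _ _ c').
Qed.

Lemma Fwd s t : pt_le s t -> forall u w, good u -> good w -> pi_tree u = s -> pi_tree w = t ->
  Qw (word u) (word w).
Proof.
elim=> [x y /Rot //|x|x y z _ IH1 _ IH2] u w gu gw eu ew.
- by apply: LI => //; rewrite eu ew.
- have [m [gm em]] := good_exists y.
  exact: Qw_trans (IH1 u m gu gm eu em) (IH2 m w gm gw em ew).
Qed.

Lemma pt_le_in cs1 cs2 c c' : pt_le c c' -> pt_le (PNode (cs1 ++ c :: cs2)) (PNode (cs1 ++ c' :: cs2)).
Proof.
elim=> [x y h|x|x y z _ h1 _ h2].
- by apply: rt_step; apply: lrot_in.
- exact: rt_refl.
- exact: rt_trans h1 h2.
Qed.

Lemma pt_le_list L1 L2 : List.Forall2 pt_le L1 L2 -> pt_le (PNode L1) (PNode L2).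
Proof.
move=> h; suff : forall pre, pt_le (PNode (pre ++ L1)) (PNode (pre ++ L2)) by move/(_ [::]).
elim: h => [|a b L1' L2' hab _ IH] pre; first exact: rt_refl.
apply: rt_trans (pt_le_in pre L1' a b hab) _.
by rewrite -!cat_rcons; apply: IH.
Qed.

Definition plug (R : seq (seq ptree)) (x : ptree) : ptree :=
  foldr (fun A acc => PNode (rcons A acc)) x R.

Lemma spine R s1 ss : all (fun A => 0 < size A) R -> 0 < size ss ->
  pt_le (plug R (PNode (s1 :: ss))) (PNode (plug R s1 :: ss)).
Proof.
elim: R => [|A R IH] /=; first by move=> _ _; exact: rt_refl.
case/andP=> hA hR hss.
apply: rt_trans (_ : pt_le _ (PNode (rcons A (PNode (plug R s1 :: ss))))) _.
  by rewrite -!cats1; apply: pt_le_in; apply: IH.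
apply: rt_step; apply: lrot_root; [by case: (A) hA | by case: (ss) hss].
Qed.

Definition plugL (R : seq (nat * seq ltree)) (x : ltree) : ltree :=
  foldr (fun p acc => LNode p.1 (rcons p.2 acc)) x R.

Fixpoint preW (R : seq (nat * seq ltree)) : seq nat :=
  match R with [::] => [::] | p :: R' => word (LNode p.1 p.2) ++ p.1 :: preW R' end.

Fixpoint preL (R : seq (nat * seq ltree)) : seq nat :=
  match R with [::] => [::] | p :: R' => p.1 :: flatten (map labels p.2) ++ preL R' end.

Definition okR (R : seq (nat * seq ltree)) := all (fun p => 0 < size p.2) R.

Lemma word_plugL R x : okR R -> word (plugL R x) = preW R ++ word x.
Proof.
elim: R => // [[k A] R] IH /andP[hA hR].
change (word (LNode k (rcons A (plugL R x))) = (word (LNode k A) ++ k :: preW R) ++ word x).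
by rewrite word_rcons // (IH hR) -catA.
Qed.

Lemma labels_plugL R x : labels (plugL R x) = preL R ++ labels x.
Proof.
elim: R => //= [[k A] R] IH /=; by rewrite -cats1 map_cat flatten_cat /= cats0 IH -catA.
Qed.

Lemma pi_plugL R x : pi_tree (plugL R x) = plug (map (fun p => map pi_tree p.2) R) (pi_tree x).
Proof. elim: R => //= [[k A] R] IH /=; by rewrite map_rcons IH. Qed.

Lemma okR_plug R : okR R -> all (fun A => 0 < size A) (map (fun p => map pi_tree p.2) R).
Proof. elim: R => //= [[k A] R] IH /andP[h1 h2]; by rewrite size_map h1 IH. Qed.

Lemma preW_sub R x : x \in preW R -> x \in preL R.
Proof.
elim: R => // [[k A] R] IH.
change (x \in word (LNode k A) ++ k :: preW R -> x \in k :: flatten (map labels A) ++ preL R).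
rewrite mem_cat in_cons => /orP[h|/orP[/eqP->|h]].
- move: (word_sub_labels _ _ h); rewrite labels_node !in_cons mem_cat.
  by case/orP => [->//|->]; rewrite ?orbT.
- by rewrite in_cons eqxx.
- by rewrite in_cons mem_cat (IH h) !orbT.
Qed.

Lemma inc_plug R x y : increasing (plugL R x) -> increasing y ->
  (forall k, lab_gt k x -> lab_gt k y) -> increasing (plugL R y).
Proof.
move=> hx hy hk.
have : (forall k, lab_gt k (plugL R x) -> lab_gt k (plugL R y)) /\ increasing (plugL R y).
  elim: R hx => [|[k A] R IH] //= hx.
  move: hx; rewrite !all_rcons => /andP[/andP[g1 g2] /andP[i1 i2]].
  have [IH1 IH2] := IH i1; split; first by move=> k'.
  by rewrite IH1 // g2 IH2 i2.
by case.
Qed.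

Lemma wf_plug R x y : wf_pt (pi_tree (plugL R x)) -> wf_pt (pi_tree y) -> wf_pt (pi_tree (plugL R y)).
Proof.
elim: R => //= [[k A] R] IH; rewrite !map_rcons !size_rcons !all_rcons.
by case/andP => h1 /andP[h2 h3] hy; rewrite h1 h3 IH.
Qed.

Lemma wf_plug_sub R x : wf_pt (pi_tree (plugL R x)) -> wf_pt (pi_tree x).
Proof.
elim: R => //= [[k A] R] IH; rewrite map_rcons all_rcons => /andP[_ /andP[h _]]; exact: IH.
Qed.

Lemma lab_gt_trans k k' y : k < k' -> lab_gt k' y -> lab_gt k y.
Proof. by case: y => //= k'' _; apply: ltn_trans. Qed.

Lemma In_rcons (T : Type) (A : seq T) c : List.In c (rcons A c).
Proof. by elim: A => /= [|a A IH]; [left | right]. Qed.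

Lemma In_rcons_l (T : Type) (A : seq T) c c' : List.In c' A -> List.In c' (rcons A c).
Proof. by elim: A => //= a A IH [<-|h]; [left | right; apply: IH]. Qed.

Lemma nth_sep (X Y : seq nat) k j : nth 0 (X ++ k :: Y) (size X + j.+1) = nth 0 Y j.
Proof. by rewrite nth_cat ltnNge leq_addr /= addKn. Qed.

Lemma wf_child k cs c : wf_pt (pi_tree (LNode k cs)) -> List.In c cs -> wf_pt (pi_tree c).
Proof. by move=> /= /andP[_]; rewrite all_map => h hc; apply: (all_In _ _ _ _ h hc). Qed.

Lemma spine_find u : forall κ p, good u -> wf_pt (pi_tree u) -> p < size (word u) ->
  nth 0 (word u) p = κ ->
  (forall q, p < q -> q < size (word u) -> κ <= nth 0 (word u) q) ->
  exists R cs, u = plugL R (LNode κ cs) /\ okR R.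
Proof.
elim/ltree_ind2: u => [|k cs IH] κ p g wf hp hk hq; first by [].
case: (eqVneq k κ) => [<-|nk]; first by exists [::], cs.
have wf' := wf; move: wf' => /= /andP[h2 _]; rewrite size_map in h2.
case/lastP: cs IH g wf h2 hp hk hq => [//|A c] IH g wf h2 hp hk hq.
have sA : 0 < size A by rewrite size_rcons in h2.
rewrite word_rcons // in hp hk hq; set X := word (LNode k A) in hp hk hq.
have gi : increasing (LNode k (rcons A c)) by case/andP: g.
case: (ltngtP p (size X)) => h.
- have hkX : κ <= k.
    have := hq (size X) h; rewrite size_cat /= nth_cat ltnn subnn /=; apply; lia.
  have : κ \in X by rewrite -hk nth_cat h; apply: mem_nth.
  move/mem_word_node => [e|[c' [hc' hx]]]; first by move: nk; rewrite e eqxx.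
  have := inc_child_gt _ _ _ _ gi (In_rcons_l _ _ _ _ hc') (word_sub_labels _ _ hx); lia.
- set p' := p - size X - 1.
  have ep : p = size X + p'.+1 by rewrite /p'; lia.
  rewrite ep nth_sep size_cat /= in hk hp.
  have hq' : forall q, p' < q -> q < size (word c) -> κ <= nth 0 (word c) q.
    move=> q hq1 hq2; have := hq (size X + q.+1); rewrite nth_sep size_cat /=; apply; lia.
  have [R' [cs' [e1 e2]]] := IH c (In_rcons _ _ _) κ p' (good_child _ _ _ g (In_rcons _ _ _))
     (wf_child _ _ _ wf (In_rcons _ _ _)) ltac:(lia) hk hq'.
  exists ((k, A) :: R'), cs'; split; first by rewrite /= -e1.
  by rewrite /okR /= sA.
- by move: hk; rewrite h nth_cat ltnn subnn /= => e; move: nk; rewrite e eqxx.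
Qed.

Lemma find_eq (s1 s2 : seq nat) (a b : pred nat) : size s1 = size s2 ->
  (forall i, i < size s1 -> a (nth 0 s1 i) = b (nth 0 s2 i)) -> find a s1 = find b s2.
Proof.
elim: s1 s2 => [|x s1 IH] [|y s2] //= [hs] h.
have := h 0 erefl; rewrite /= => ->; case: (b y) => //; congr S; apply: IH => // i hi.
exact: (h i.+1).
Qed.

Lemma index_block κ (w : seq nat) (L : seq (seq nat)) : κ \notin w ->
  index κ (w ++ flatten (map (cons κ) L)) = size w.
Proof.
move=> h; rewrite index_cat (negbTE h); case: L => [|l L] /=; first by rewrite addn0.
by rewrite eqxx addn0.
Qed.

Lemma match_blocks (P : ltree -> ltree -> Prop) κ κ' A B :
  (forall a b, List.In a A -> List.In b B -> Qw (word a) (word b) -> P a b) ->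
  (forall a, List.In a A -> κ \notin word a) -> (forall b, List.In b B -> κ' \notin word b) ->
  Qw (flatten (map (cons κ) (map word A))) (flatten (map (cons κ') (map word B))) ->
  List.Forall2 P A B.
Proof.
elim: A B => [|a A IH] [|b B] hP hA hB hq.
- constructor.
- by case: hq => /=.
- by case: hq => /=.
- have hq1 : Qw (word a ++ flatten (map (cons κ) (map word A)))
                (word b ++ flatten (map (cons κ') (map word B))) by exact: Qw_cons hq.
  case: hq => _ e _.
  have sz : size (word a) = size (word b).
    rewrite -(index_block κ (word a) (map word A)) ?hA //; last by left.
    rewrite -(index_block κ' (word b) (map word B)) ?hB //; last by left.
    apply: find_eq; first by case: hq1.
    move=> i hi; have := e i.+1 0 hi erefl; by [].
  constructor.
  + apply: hP; [by left | by left | exact: Qw_catl sz hq1].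
  + apply: IH.
    * by move=> a' b' ha hb; apply: hP; right.
    * by move=> a' ha; apply: hA; right.
    * by move=> b' hb; apply: hB; right.
    * exact: Qw_catr sz hq1.
Qed.

Lemma inc_plug_sub R x : increasing (plugL R x) -> increasing x.
Proof.
elim: R => //= [[k A] R] IH /=; rewrite !all_rcons => /andP[_ /andP[h _]]; exact: IH.
Qed.

Lemma good_plug_sub R x : good (plugL R x) -> good x.
Proof.
case/andP => h1; rewrite labels_plugL cat_uniq => /and3P[_ _ h3].
by rewrite /good (inc_plug_sub _ _ h1) h3.
Qed.

Lemma good_plug R x y : good (plugL R x) -> good y -> (forall k, lab_gt k x -> lab_gt k y) ->
  (forall z, z \in labels y -> z \in labels x) -> good (plugL R y).
Proof.
case/andP => i1 u1 /andP[i2 u2] hk hz; rewrite /good (inc_plug _ _ _ i1 i2 hk) /=.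
move: u1; rewrite !labels_plugL !cat_uniq => /and3P[h1 h2 h3]; rewrite h1 u2 andbT /=.
apply/hasPn => z /hz hzx; by move/hasPn: h2 => /(_ z hzx).
Qed.

Lemma word_ge_root k cs x : increasing (LNode k cs) -> x \in word (LNode k cs) -> k <= x.
Proof.
move=> g /mem_word_node [->//|[c [hc hx]]].
by apply: ltnW; apply: inc_child_gt g hc (word_sub_labels _ _ hx).
Qed.

Lemma run_full W p : (forall q, p < q -> q < size W -> nth 0 W p <= nth 0 W q) -> run W p = size W - p.+1.
Proof.
move=> h; rewrite /run find_none ?size_drop // => x hx.
have [j hj <-] : exists2 j, j < size (drop p.+1 W) & nth 0 (drop p.+1 W) j = x.
  by exists (index x (drop p.+1 W)); [rewrite index_mem | rewrite nth_index].
rewrite nth_drop -leqNgt; apply: h; rewrite size_drop in hj; lia.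
Qed.

Lemma run_full_inv W p : size W - p.+1 <= run W p ->
  forall q, p < q -> q < size W -> nth 0 W p <= nth 0 W q.
Proof.
rewrite /run -size_drop => h q h1 h2.
have e : find (fun x => x < nth 0 W p) (drop p.+1 W) = size (drop p.+1 W).
  by apply/eqP; rewrite eqn_leq h find_size_le.
have : ~~ has (fun x => x < nth 0 W p) (drop p.+1 W) by rewrite has_find e ltnn.
move/hasPn => /(_ (nth 0 W q)); rewrite -leqNgt; apply.
have -> : q = p.+1 + (q - p.+1) by lia.
rewrite -nth_drop; apply: mem_nth; rewrite size_drop; apply: ltn_sub2r; [exact: leq_ltn_trans h1 h2 | exact: h2].
Qed.

Lemma Forall2_map (P : ltree -> ltree -> Prop) A B :
  List.Forall2 P A B -> List.Forall2 (fun a b => pt_le (pi_tree a) (pi_tree b)) A B ->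
  List.Forall2 pt_le (map pi_tree A) (map pi_tree B).
Proof.
move=> _; elim=> [|a b A' B' h _ IH] /=; by constructor.
Qed.

Lemma word_cons2 k c cs : word (LNode k (c :: cs)) = word c ++ flatten (map (cons k) (map word cs)).
Proof. by []. Qed.

Lemma notin_child k cs c : uniq (labels (LNode k cs)) -> List.In c cs -> k \notin word c.
Proof.
rewrite labels_node cons_uniq => /andP[h _] hc; apply/negP => /word_sub_labels hk.
by move/negP: h; apply; apply/mem_flatten_map; exists c.
Qed.

Lemma Bwd v : forall u, good u -> good v -> wf_pt (pi_tree u) -> wf_pt (pi_tree v) ->
  Qw (word u) (word v) -> pt_le (pi_tree u) (pi_tree v).
Proof.
elim/ltree_ind2: v => [|κ' vs IH] u gu gv wu wv hq.
- case: u gu wu hq => [|k cs] gu wu hq; first exact: rt_refl.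
  move: wu => /= /andP[h2 _]; rewrite size_map in h2.
  case: cs gu h2 hq => [|c1 [|c2 cs]] // _ _ [] /=; rewrite size_cat /=; lia.
have wv' := wv; move: wv' => /= /andP[hv2 _]; rewrite size_map in hv2.
case: vs IH gv wv hq hv2 => [|v1 [|v2 vs'']] // IH gv wv hq _.
set vs' := v2 :: vs''.
have gvi : increasing (LNode κ' (v1 :: vs')) by case/andP: gv.
have gvu : uniq (labels (LNode κ' (v1 :: vs'))) by case/andP: gv.
set V := word (LNode κ' (v1 :: vs')) in hq.
have eV : V = word v1 ++ κ' :: (word v2 ++ flatten (map (cons κ') (map word vs''))) by rewrite /V /vs'.
set p := size (word v1).
have hVp : nth 0 V p = κ' by rewrite eV nth_cat ltnn subnn.
have hpV : p < size V by rewrite eV size_cat /=; lia.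
have Vge : forall q, p < q -> q < size V -> nth 0 V p <= nth 0 V q.
  move=> q _ hq2; rewrite hVp; apply: word_ge_root gvi _; exact: mem_nth.
case: (hq) => sz heq hrun.
have [κ hκ] : exists κ, nth 0 (word u) p = κ by eexists.
have hpW : p < size (word u) by rewrite sz.
have Wge : forall q, p < q -> q < size (word u) -> κ <= nth 0 (word u) q.
  rewrite -hκ; apply: run_full_inv; rewrite sz -(run_full _ _ Vge); exact: hrun p hpW.
have [R [cs [eu okR']]] := spine_find u κ p gu wu hpW hκ Wge.
subst u.
have gx := good_plug_sub _ _ gu; have wx := wf_plug_sub _ _ wu.
have wx' := wx; move: wx' => /= /andP[hs2 _]; rewrite size_map in hs2.
case: cs gx wx hs2 gu wu Wge hpW hκ hq hrun heq sz => [|s1 [|s2 ss']] // gx wx _ gu wu Wge hpW hκ hq hrun heq sz.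
set ss := s2 :: ss'.
have gxu : uniq (labels (LNode κ (s1 :: ss))) by case/andP: gx.
have gxi : increasing (LNode κ (s1 :: ss)) by case/andP: gx.
have eW : word (plugL R (LNode κ (s1 :: ss))) = (preW R ++ word s1) ++ flatten (map (cons κ) (map word ss)).
  by rewrite word_plugL // -catA.
have nk1 : κ \notin preW R ++ word s1.
  rewrite mem_cat negb_or (notin_child _ _ _ gxu (or_introl erefl)) andbT.
  apply/negP => /preW_sub hk; case/andP: gu => _; rewrite labels_plugL cat_uniq => /and3P[_ h _].
  by move/hasPn: h => /(_ κ); rewrite labels_node in_cons eqxx hk => /(_ isT).
have i1 : index κ (word (plugL R (LNode κ (s1 :: ss)))) = size (preW R ++ word s1).
  by rewrite eW index_block.
have i2 : index κ' V = p.
  by rewrite /V word_cons2 index_block // (notin_child _ _ _ gvu (or_introl erefl)).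
have i3 : index κ (word (plugL R (LNode κ (s1 :: ss)))) = index κ' V.
  apply: find_eq => // i hi; have := heq i p hi hpW; by rewrite hκ hVp.
have szp : size (preW R ++ word s1) = size (word v1) by rewrite -i1 i3 i2.
rewrite eW in hq.
have qv : Qw (preW R ++ word s1) (word v1).
  exact: (Qw_catl (preW R ++ word s1) _ (word v1) (flatten (map (cons κ') (map word vs'))) szp hq).
have qF : Qw (flatten (map (cons κ) (map word ss))) (flatten (map (cons κ') (map word vs'))).
  exact: (Qw_catr (preW R ++ word s1) _ (word v1) (flatten (map (cons κ') (map word vs'))) szp hq).
have h1 : pt_le (pi_tree (plugL R s1)) (pi_tree v1).
  apply: IH; first by left.
  - apply: good_plug gu (good_child _ _ _ gx (or_introl erefl)) _ _.
    + move=> k /= hk; apply: lab_gt_trans hk _.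
      by move: gxi => /= /andP[/andP[h _] _].
    + by move=> z hz; rewrite labels_node in_cons /= mem_cat hz orbT.
  - exact: good_child _ _ _ gv (or_introl erefl).
  - exact: wf_plug wu (wf_child _ _ _ wx (or_introl erefl)).
  - exact: wf_child _ _ _ wv (or_introl erefl).
  - by rewrite word_plugL.
have hF : List.Forall2 (fun a b => pt_le (pi_tree a) (pi_tree b)) ss vs'.
  apply: match_blocks qF.
  - move=> a b ha hb hab; apply: IH; [by right | exact: good_child _ _ _ gx (or_intror ha)
      | exact: good_child _ _ _ gv (or_intror hb) | exact: wf_child _ _ _ wx (or_intror ha)
      | exact: wf_child _ _ _ wv (or_intror hb) | exact: hab].
  - by move=> a ha; apply: notin_child gxu (or_intror ha).
  - by move=> b hb; apply: notin_child gvu (or_intror hb).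
rewrite pi_plugL /=.
apply: rt_trans (spine _ _ _ (okR_plug _ okR') _) _; first by [].
apply: pt_le_list; constructor; first by rewrite -pi_plugL.
exact: (Forall2_map _ _ _ hF hF).
Qed.

Lemma find_ge (s : seq nat) (p : pred nat) r : r <= size s ->
  (forall m, m < r -> ~~ p (nth 0 s m)) -> r <= find p s.
Proof.
move=> hr h; rewrite leqNgt; apply/negP => hf.
have hs : has p s by rewrite has_find; apply: leq_trans hf hr.
by have := nth_find 0 hs; rewrite (negbTE (h _ hf)).
Qed.

Lemma find_lt (s : seq nat) (p : pred nat) m : m < find p s -> ~~ p (nth 0 s m).
Proof. by move=> h; rewrite (before_find 0 h). Qed.

Lemma run_ge W i r : r <= size W - i.+1 ->
  (forall l, i < l -> l <= i + r -> nth 0 W i <= nth 0 W l) -> r <= run W i.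
Proof.
move=> hr h; rewrite /run; apply: find_ge; first by rewrite size_drop.
move=> m hm; rewrite nth_drop -leqNgt; apply: h; lia.
Qed.

Lemma run_nth W i l : i < l -> l <= i + run W i -> l < size W -> nth 0 W i <= nth 0 W l.
Proof.
move=> h1 h2 h3; have := @find_lt (drop i.+1 W) (fun x => x < nth 0 W i) (l - i.+1) ltac:(rewrite /run in h2; lia).
by rewrite nth_drop -leqNgt; have -> : i.+1 + (l - i.+1) = l by lia.
Qed.

Lemma Rel_Qw x y : avoids213 y -> (Rel x y <-> Qw x y).
Proof.
move=> av; split.
- case=> sz e m; split => // i hi.
  have hr' : run y i <= size y - i.+1 by rewrite /run -size_drop; exact: find_size_le.
  have hr : run y i <= size x - i.+1 by rewrite sz.
  apply: (run_ge x i (run y i) hr) => l h1 h2.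
  have hl : l < size x by lia.
  apply: (m i l h1 hl); apply: (run_nth y i l h1 h2); by rewrite -sz.
- case=> sz e r; split => // i j hij hj hy.
  have hi : i < size x by apply: ltn_trans hij hj.
  case: (ltngtP (nth 0 y i) (nth 0 y j)) hy => // hy _.
  + have hd : forall l, i < l -> l <= i + (j - i) -> nth 0 y i <= nth 0 y l.
      move=> l h1 h2; case: (ltngtP l j) => h3; last by rewrite h3 ltnW.
      * rewrite leqNgt; apply/negP => hl; apply: (av i l j h1 h3); first by rewrite -sz.
        by split.
      * lia.
    have hyr : j - i <= run y i by apply: (run_ge y i (j - i) _ hd); rewrite -sz; lia.
    apply: (run_nth x i j hij _ hj); have := r i hi; lia.
  + by apply: eq_leq; apply/eqP; rewrite e // hy.
Qed.

Lemma word_child_sub k cs c x : List.In c cs -> x \in word c -> x \in word (LNode k cs).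
Proof.
case: cs => // c1 cs [<-|hc] hx; rewrite word_cons2 mem_cat; first by rewrite hx.
apply/orP; right; rewrite -map_comp; apply/mem_flatten_map; exists c; split => //=.
by rewrite in_cons hx orbT.
Qed.

Lemma labels_sub_word u x : wf_pt (pi_tree u) -> x \in labels u -> x \in word u.
Proof.
elim/ltree_ind2: u x => // k cs IH x wf /mem_labels_node [->|[c [hc hx]]].
- have wf' := wf; move: wf' => /= /andP[h _]; rewrite size_map in h.
  case: cs {IH wf} h => [|c1 [|c2 cs]] // _.
  by rewrite /= mem_cat in_cons eqxx orbT.
- apply: (word_child_sub k cs c x hc); apply: IH => //; exact: (wf_child _ _ _ wf hc).
Qed.

Lemma gsp_good u : is_gsp u -> good u.
Proof.
case/and3P => _ hp hi; rewrite /good hi /=; by rewrite (perm_uniq hp) iota_uniq.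
Qed.

Lemma gsp_packed u : is_gsp u -> packed (word u).
Proof.
case/and3P => wf hp _; set N := size (labels u).
have mem : forall x, (x \in word u) = (x \in iota 1 N).
  move=> x; rewrite -(perm_mem hp); apply/idP/idP; [exact: word_sub_labels | exact: labels_sub_word].
apply/andP; split; apply/allP => x.
- rewrite mem_iota => /andP[h1 h2]; rewrite mem.
  have ne : word u != [::].
    by apply/negP => /eqP e; move: h1 h2; rewrite e /=; case: x.
  have : maxw (word u) \in word u by apply: maxw_in.
  rewrite mem mem_iota => /andP[_ h3]; rewrite mem_iota h1 /=.
  rewrite add1n ltnS in h2; exact: leq_ltn_trans h2 h3.
- by rewrite mem mem_iota => /andP[].
Qed.

Theorem mainTheorem9 (n : nat) (u : ltree) (t : ptree) (v : ltree) :
  is_gsp u -> gsp_degree u = n ->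
  wf_pt t -> pt_degree t = n ->
  is_iota t v ->
  (pt_le (pi_tree u) t <-> gsp_le u v).
Proof.
move=> gu _ wt _ [gv [et av]]; subst t.
have pu := gsp_packed u gu; have pv := gsp_packed v gv.
have gu' := gsp_good u gu; have gv' := gsp_good v gv.
have wu : wf_pt (pi_tree u) by case/and3P: gu.
rewrite /gsp_le (pw_le_iff _ _ pu pv) (Rel_Qw _ _ av); split.
- by move=> h; apply: Fwd h u v gu' gv' erefl erefl.
- by move=> h; apply: Bwd.
Qed.
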